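(* Let $mG$, $mG'$ be finite canonical misinformation games and $t\ge0$. If $mG'\in\mathcal{AD}^{(t)}(\{mG\})$ and $mG'\in\mathcal{AD}(\{mG'\})$, then $mG'\in\mathcal{AD}^\infty(\{mG\})$.
   Context: A normal-form game is $G=\langle N,S,P\rangle$ with finite players $N$, finite pure strategy sets $S_i$, positions $S=\times_i S_i$, payoffs $P_i:S\to\mathbb{R}$. A misinformation game $mG=\langle G^0,G^1,\dots,G^{|N|}\rangle$ consists of the actual game $G^0$ and subjective games $G^i$; it is canonical if all $G^i=\langle N,S,P^i\rangle$ differ from $G^0$ only in payoffs and in every $G^i$ all players have equally many pure strategies. $NME(mG)$ is the set of profiles $\sigma=(\sigma_1,\dots,\sigma_{|N|})$ such that each $\sigma_i$ is player $i$'s component of some Nash equilibrium of $G^i$. $\chi(\sigma)=\mathrm{supp}(\sigma_1)\times\dots\times\mathrm{supp}(\sigma_{|N|})$. For $\vec v\in S$, $mG_{\vec v}$ is obtained by replacing, in every $P^i$ ($i\ge1$), the payoff vector at position $\vec v$ by $P^0(\vec v)$. For a set $M$ of misinformation games, $\mathcal{AD}(M)=\{mG_{\vec u}: mG\in M,\sigma\in NME(mG),\vec u\in\chi(\sigma)\}$, $\mathcal{AD}^{(0)}(M)=M$, $\mathcal{AD}^{(t+1)}(M)=\mathcal{AD}^{(t)}(\mathcal{AD}(M))$; the length $\mathfrak{L}$ is the least $t\ge0$ with $\mathcal{AD}^{(t+1)}(M)=\mathcal{AD}^{(t)}(M)$ and $\mathcal{AD}^\infty(M)=\mathcal{AD}^{(\mathfrak{L})}(M)$.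 *)

(* Defs.v *)
From HB Require Import structures.
From mathcomp Require Import all_boot all_order all_algebra.
From mathcomp Require Import reals.
Set Implicit Arguments. Unset Strict Implicit. Unset Printing Implicit Defensive.
Import Order.TTheory GRing.Theory Num.Theory.
Local Open Scope ring_scope.

Section MG.
Variables (R : realType) (n m : nat).
(* Players are 'I_n; in a canonical misinformation game every player has the
   same number m of pure strategies, in every (actual and subjective) game. *)

Definition position := {ffun 'I_n -> 'I_m}.

Definition game := {ffun position -> {ffun 'I_n -> R}}.

Definition mgame := (game * {ffun 'I_n -> game})%type.
Definition actual (mG : mgame) : game := mG.1.
Definition subj (mG : mgame) (i : 'I_n) : game := mG.2 i.

Definition mixed (s : {ffun 'I_m -> R}) : Prop :=
  (forall a, 0 <= s a) /\ \sum_a s a = 1.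
Definition profile := 'I_n -> {ffun 'I_m -> R}.
Definition mixed_profile (sigma : profile) : Prop := forall i, mixed (sigma i).

Definition exp_payoff (P : game) (sigma : profile) (i : 'I_n) : R :=
  \sum_(s : position) (\prod_(j : 'I_n) sigma j (s j)) * P s i.

Definition deviate (sigma : profile) (i : 'I_n) (tau : {ffun 'I_m -> R}) : profile :=
  fun j => if j == i then tau else sigma j.

Definition nash (P : game) (sigma : profile) : Prop :=
  mixed_profile sigma /\
  forall i tau, mixed tau -> exp_payoff P (deviate sigma i tau) i <= exp_payoff P sigma i.

Definition NME (mG : mgame) (sigma : profile) : Prop :=
  forall i, exists sigma', nash (subj mG i) sigma' /\ sigma' i = sigma i.

Definition chi (sigma : profile) (v : position) : Prop := forall i, 0 < sigma i (v i).

Definition update (mG : mgame) (v : position) : mgame :=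
  (actual mG, [ffun i => [ffun s => if s == v then actual mG v else subj mG i s]]).

Definition mset := mgame -> Prop.
Definition mset_eq (A B : mset) : Prop := forall g, A g <-> B g.

Definition AD (M : mset) : mset := fun g =>
  exists mG sigma u, [/\ M mG, NME mG sigma, chi sigma u & g = update mG u].

Fixpoint ADt (t : nat) (M : mset) : mset :=
  match t with
  | 0 => M
  | t'.+1 => ADt t' (AD M)
  end.

Definition AD_infty (M : mset) : mset := fun g =>
  exists L : nat,
    [/\ mset_eq (ADt L.+1 M) (ADt L M),
        (forall t, (t < L)%N -> ~ mset_eq (ADt t.+1 M) (ADt t M))
      & ADt L M g].

Definition singleton (mG : mgame) : mset := fun g => g = mG.
End MG.

(* Main.v *)
Require Import Defs.
From mathcomp Require Import all_boot all_order all_algebra.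
From mathcomp Require Import reals.
From Stdlib Require Import Classical.

Set Implicit Arguments. Unset Strict Implicit. Unset Printing Implicit Defensive.

Lemma min_ex (P : nat -> Prop) k : P k ->
  exists L, P L /\ forall t, (t < L)%N -> ~ P t.
Proof.
have: forall b k, (k <= b)%N -> P k -> exists L, P L /\ forall t, (t < L)%N -> ~ P t.
  elim=> [|b IH] k0 Hk Pk.
    exists k0; split=> // t Ht; by move: (leq_trans Ht Hk).
  destruct (classic (exists t, (t < k0)%N /\ P t)) as [[t [Ht Pt]]|Hn].
    by apply: (IH t) => //; rewrite -ltnS (leq_trans Ht Hk).
  exists k0; split=> // t Ht Pt; apply: Hn; by exists t.
by move=> H Pk; apply: (H k k).
Qed.

Section S.
Variables (R : realType) (n m : nat).

Definition E (g : mgame R n m) : {set position n m} :=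
  [set v | [forall i, subj g i v == actual g v]].

Lemma ADtS t (M : mset R n m) : ADt t.+1 M = AD (ADt t M).
Proof. elim: t M => [|t IH] M //=. exact: IH (AD M). Qed.

Lemma AD_eq (A B : mset R n m) : mset_eq A B -> mset_eq (AD A) (AD B).
Proof.
move=> H g; split=> -[k [s [u [Hk Hn Hc ->]]]]; exists k, s, u; split=> //;
  by apply/H.
Qed.

Lemma step_E (g : mgame R n m) u : update g u = g \/ (#|E g| < #|E (update g u)|)%N.
Proof.
case: g => a f.
case Hu: (u \in E (a, f)).
  left; rewrite /update /=; congr pair; apply/ffunP => i; apply/ffunP => s.
  rewrite !ffunE; case: eqP => // ->.
  by move: Hu; rewrite inE => /forallP /(_ i) /eqP.
right; apply: proper_card; apply/properP; split.
  apply/subsetP => v; rewrite !inE => /forallP H; apply/forallP => i.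
  rewrite /subj /actual /update /= !ffunE.
  case: (eqVneq v u) => [->|_] //.

exists u; last by rewrite Hu.
rewrite inE; apply/forallP => i; by rewrite /subj /actual /update /= !ffunE eqxx.
Qed.

Lemma chain (g : mgame R n m) t h : ADt t (singleton g) h ->
  (#|E g| + t <= #|E h|)%N \/
  [/\ (0 < t)%N, ADt t.+1 (singleton g) h & ADt t.-1 (singleton g) h].
Proof.
elim: t h => [|t IH] h.
  by move=> /= ->; left; rewrite addn0.
rewrite ADtS => -[k [sig [u [Hk Hn Hc ->]]]].
have [Heq|Hlt] := step_E k u.
  rewrite Heq; right; split=> //.
  have Hk1 : ADt t.+1 (singleton g) k.
    by rewrite ADtS; exists k, sig, u; split.
  by rewrite ADtS; exists k, sig, u; split.
case: (IH k Hk) => [Hle|[Ht H1 H2]].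
  by left; rewrite addnS; exact: leq_ltn_trans Hle Hlt.
right; split=> //.
  by rewrite ADtS; exists k, sig, u; split.
rewrite /= -(prednK Ht) ADtS; exists k, sig, u; split=> //.
Qed.

Lemma stab (g : mgame R n m) t h : (#|{: position n m}| < t)%N ->
  ADt t (singleton g) h -> ADt t.+1 (singleton g) h /\ ADt t.-1 (singleton g) h.
Proof.
move=> Ht /chain [Hle|[_ H1 H2]] //.
have := leq_trans Hle (max_card (mem (E h))).
by rewrite leqNgt (leq_trans Ht (leq_addl _ _)).
Qed.

Lemma fix_ex (g : mgame R n m) k :
  mset_eq (ADt k.+1 (singleton g)) (ADt k (singleton g)) ->
  forall d, mset_eq (ADt (k + d) (singleton g)) (ADt k (singleton g)).
Proof.
move=> Hk; elim=> [|d IH]; first by rewrite addn0.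
rewrite addnS => h; rewrite ADtS.
have H1 := AD_eq IH h; have H2 := Hk h; rewrite ADtS in H2; tauto.
Qed.
End S.

Theorem proposition10 (R : realType) (n m : nat) (mG mG' : mgame R n m) (t : nat) :
  ADt t (singleton mG) mG' ->
  AD (singleton mG') mG' ->
  AD_infty (singleton mG) mG'.
Proof.
move=> Ht Hself.
set N := #|{: position n m}|.
have HN : mset_eq (ADt N.+2 (singleton mG)) (ADt N.+1 (singleton mG)).
  move=> h; split=> H.
    by have [] := stab (ltnW (ltnSn N.+1)) H.
  by have [] := stab (ltnSn N) H.
have [L [HL Hmin]] := @min_ex (fun L => mset_eq (ADt L.+1 (singleton mG)) (ADt L (singleton mG))) N.+1 HN.
exists L; split=> //.
have Hd : forall d, ADt (t + d) (singleton mG) mG'.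
  elim=> [|d IH]; first by rewrite addn0.
  rewrite addnS ADtS.
  case: Hself => [g [s [u [Hg Hn Hc He]]]].
  by exists g, s, u; split=> //; rewrite Hg.
have := fix_ex HL t; rewrite addnC => /(_ mG') <-.
exact: Hd.
Qed.
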